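(* Let $k\ge 0$ be an integer and define the sequence $(G_n)_{n\ge 0}$ by $G_0=k$, $G_1=1$, and $G_n=G_{n-1}+G_{n-2}$ for $n\ge 2$. Then for every integer $m\ge 0$, $$[\underbrace{4,4,\dots,4}_{m},\,2k+3]=\frac{G_{3m+4}}{G_{3m+1}},$$ where the continued fraction has $m+1$ entries $a_0,\dots,a_m$ with $a_i=4$ for $0\le i<m$ and $a_m=2k+3$.
   Context: For numbers $a_0,a_1,\dots,a_m$, the finite simple continued fraction $[a_0,a_1,\dots,a_m]$ denotes $a_0+\cfrac{1}{a_1+\cfrac{1}{\ddots+\cfrac{1}{a_m}}}$, evaluated as a rational number; $[a_0]=a_0$. *)

(* Defs.v *)
From mathcomp Require Import all_boot all_order all_algebra.
Set Implicit Arguments. Unset Strict Implicit. Unset Printing Implicit Defensive.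
Import Order.TTheory GRing.Theory Num.Theory.
Local Open Scope ring_scope.

Fixpoint cfrac (s : seq rat) : rat :=
  match s with
  | [::] => 0
  | [:: a] => a
  | a :: t => a + (cfrac t)^-1
  end.

Fixpoint Gseq (k : nat) (n : nat) : nat :=
  match n with
  | 0 => k
  | 1 => 1
  | (n'.+1 as m).+1 => Gseq k m + Gseq k n'
  end.

(* Main.v *)
Require Import Defs.
From mathcomp Require Import all_boot all_order all_algebra.
From mathcomp Require Import zify.
Import GRing.Theory Num.Theory.
Local Open Scope ring_scope.

Lemma GS k n : Gseq k n.+2 = (Gseq k n.+1 + Gseq k n)%N.
Proof. by []. Qed.

Lemma G6 k n : Gseq k (n + 6) = (4 * Gseq k (n + 3) + Gseq k n)%N.
Proof. rewrite !addnS !addn0 !GS. lia. Qed.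

Lemma Gpos k n : (0 < Gseq k n.+1)%N.
Proof. elim: n => [//|n IH]. rewrite GS. lia. Qed.

Lemma cfrac_cons (a : rat) s : s != [::] -> cfrac (a :: s) = a + (cfrac s)^-1.
Proof. by case: s. Qed.

Theorem theorem1 (k m : nat) :
  cfrac (rcons (nseq m 4%:R) (2 * k + 3)%N%:R) =
  (Gseq k (3 * m + 4))%:R / (Gseq k (3 * m + 1))%:R.
Proof.
elim: m => [|m IH].
  have -> : Gseq k (3 * 0 + 4) = (2 * k + 3)%N by rewrite /=; lia.
  by rewrite /= divr1.
rewrite [rcons _ _]/= cfrac_cons; last by case: (nseq m _).
rewrite IH invf_div.
have -> : (3 * m.+1 + 4 = (3 * m + 1) + 6)%N by lia.
have -> : (3 * m.+1 + 1 = (3 * m + 1) + 3)%N by lia.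
rewrite G6.
have hp : (Gseq k (3 * m + 1 + 3))%:R != 0 :> rat.
  by rewrite pnatr_eq0 -lt0n addnS Gpos.
have -> : (3 * m + 4 = 3 * m + 1 + 3)%N by lia.
rewrite natrD natrM mulrDl -mulrA divff // mulr1.

Qed.
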